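(* Let $\mathcal{H}$ be a real Hilbert space, let $A,B:\mathcal{H}\rightrightarrows\mathcal{H}$ be maximally monotone operators, let $\gamma>0$, and let $(\lambda_n)_{n=0}^\infty$ be a sequence in $[0,1]$ such that $\sum_{n\geq 0}\lambda_n(1-\lambda_n)=+\infty$. Let $\beta\in{]0,1[}$ and suppose that $q\in\operatorname{ran}\left(\operatorname{Id}+\frac{\gamma}{2(1-\beta)}(A+B)\right)$. Given any $x_0\in\mathcal{H}$, define for $n=0,1,2,\ldots$ \[ x_{n+1}=(1-\lambda_n)x_n+\lambda_n\left(2\beta J_{(\gamma B_{-q})}-\operatorname{Id}\right)\left(2\beta J_{(\gamma A_{-q})}-\operatorname{Id}\right)(x_n). \] Then there exists $x^\star\in\operatorname{Fix}\left((2\beta J_{(\gamma B_{-q})}-\operatorname{Id})(2\beta J_{(\gamma A_{-q})}-\operatorname{Id})\right)$ such that: (i) $(x_{n+1}-x_n)_{n=0}^\infty$ converges strongly to $0$; (ii) $(x_n)_{n=0}^\infty$ converges weakly to $x^\star$, and $J_{\gamma A}(q+x^\star)=J_{\frac{\gamma}{2(1-\beta)}(A+B)}(q)$; (iii) $\left(J_{\gamma A}(q+x_n)\right)_{n=0}^\infty$ converges strongly to $J_{\frac{\gamma}{2(1-\beta)}(A+B)}(q)$.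
   Context: For an operator $T:\mathcal{H}\rightrightarrows\mathcal{H}$, the resolvent is $J_T:=(\operatorname{Id}+T)^{-1}$, i.e. $J_T(x)=\{y: x\in y+T(y)\}$; for maximally monotone $T$ it is single-valued with full domain. For $w\in\mathcal{H}$, the inner $w$-perturbation of $T$ is $T_w(x):=T(x-w)$; thus $\gamma A_{-q}$ denotes the operator $x\mapsto\gamma A(x+q)$. $\operatorname{Fix}S=\{x: x=S(x)\}$ and $\operatorname{ran}$ denotes the range. *)

(* Defs.v *)
From HB Require Import structures.
From mathcomp Require Import all_boot all_order all_algebra.
From mathcomp Require Import all_classical all_reals all_analysis.
Set Implicit Arguments. Unset Strict Implicit. Unset Printing Implicit Defensive.
Import Order.TTheory GRing.Theory Num.Theory.
Import numFieldNormedType.Exports.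
Local Open Scope classical_set_scope.
Local Open Scope ring_scope.

Record inner_product (R : realType) (H : lmodType R) := InnerProduct {
  ip :> H -> H -> R;
  ip_sym : forall x y, ip x y = ip y x;
  ip_linear : forall (a : R) (x y z : H), ip (a *: x + y) z = a * ip x z + ip y z;
  ip_ge0 : forall x, 0 <= ip x x;
  ip_eq0 : forall x, ip x x = 0 -> x = 0 }.

Section Hilbert.
Context {R : realType} {H : lmodType R} (ip : inner_product H).

Definition hnorm (x : H) : R := Num.sqrt (ip x x).

Definition strong_cvg (u : nat -> H) (l : H) : Prop :=
  (fun n => hnorm (u n - l)) @ \oo --> (0 : R).

Definition weak_cvg (u : nat -> H) (l : H) : Prop :=
  forall y : H, (fun n => ip (u n) y) @ \oo --> ip l y.

Definition hilbert_complete : Prop :=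
  forall u : nat -> H,
    (forall e : R, 0 < e -> exists N : nat, forall m n : nat,
        (N <= m)%N -> (N <= n)%N -> hnorm (u m - u n) < e) ->
    exists l : H, strong_cvg u l.

Definition monotone (T : H -> set H) : Prop :=
  forall x y u v, T x u -> T y v -> 0 <= ip (x - y) (u - v).

Definition maximally_monotone (T : H -> set H) : Prop :=
  monotone T /\
  forall T' : H -> set H, monotone T' ->
    (forall x u, T x u -> T' x u) -> forall x u, T' x u -> T x u.

Definition op_scale (g : R) (T : H -> set H) : H -> set H :=
  fun x v => exists u, T x u /\ v = g *: u.

Definition op_add (T S : H -> set H) : H -> set H :=
  fun x v => exists a b, T x a /\ S x b /\ v = a + b.

(** inner w-perturbation  T_w (x) := T (x - w) *)
Definition op_perturb (w : H) (T : H -> set H) : H -> set H :=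
  fun x => T (x - w).

Definition in_ran_Id_plus (T : H -> set H) (q : H) : Prop :=
  exists x u, T x u /\ q = x + u.

(** resolvent J_T = (Id + T)^{-1}, as a function: J_T(x) is (a chosen) y
    with x ∈ y + T y; it is the unique such y whenever T is monotone and
    x ∈ ran (Id + T) (in particular everywhere if T is maximally monotone). *)
Definition resolvent (T : H -> set H) (x : H) : H :=
  xget 0 [set y | T y (x - y)].

End Hilbert.

(* Main.v *)
Require Import Defs.
From HB Require Import structures.
From mathcomp Require Import all_boot all_order all_algebra.
From mathcomp Require Import all_classical all_reals all_analysis.
From mathcomp Require Import ring lra.
Import Order.TTheory GRing.Theory Num.Theory.
Import numFieldNormedType.Exports.
Local Open Scope classical_set_scope.
Local Open Scope ring_scope.


Section IP.
Context {R : realType} {H : lmodType R} (ip : inner_product H).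

Definition sq (x : H) : R := ip x x.

Lemma ip0l z : ip 0 z = 0.
Proof.
have := ip_linear ip 1 0 0 z. rewrite scale1r addr0 mul1r.
move=> h. have : ip 0 z + ip 0 z - ip 0 z = ip 0 z - ip 0 z by rewrite -h.
by rewrite addrK subrr.
Qed.

Lemma ipDl x y z : ip (x + y) z = ip x z + ip y z.
Proof. by have := ip_linear ip 1 x y z; rewrite scale1r mul1r. Qed.

Lemma ipZl a x z : ip (a *: x) z = a * ip x z.
Proof. by have := ip_linear ip a x 0 z; rewrite addr0 ip0l addr0. Qed.

Lemma ipNl x z : ip (- x) z = - ip x z.
Proof. by rewrite -scaleN1r ipZl mulN1r. Qed.

Lemma ipBl x y z : ip (x - y) z = ip x z - ip y z.
Proof. by rewrite ipDl ipNl. Qed.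

Lemma ip0r z : ip z 0 = 0.
Proof. by rewrite ip_sym ip0l. Qed.
Lemma ipDr x y z : ip z (x + y) = ip z x + ip z y.
Proof. by rewrite ip_sym ipDl !(ip_sym ip z). Qed.
Lemma ipZr a x z : ip z (a *: x) = a * ip z x.
Proof. by rewrite ip_sym ipZl (ip_sym ip z). Qed.
Lemma ipNr x z : ip z (- x) = - ip z x.
Proof. by rewrite ip_sym ipNl (ip_sym ip z). Qed.
Lemma ipBr x y z : ip z (x - y) = ip z x - ip z y.
Proof. by rewrite ipDr ipNr. Qed.

Definition ipE := (ipDl, ipDr, ipZl, ipZr, ipNl, ipNr, ip0l, ip0r).

Lemma sq_ge0 x : 0 <= sq x. Proof. exact: ip_ge0. Qed.
Lemma sq_eq0 x : sq x = 0 -> x = 0. Proof. exact: ip_eq0. Qed.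
Lemma sq0 : sq 0 = 0. Proof. by rewrite /sq ip0l. Qed.

Lemma sqD x y : sq (x + y) = sq x + 2 * ip x y + sq y.
Proof. rewrite /sq !ipE (ip_sym ip y x); ring. Qed.
Lemma sqB x y : sq (x - y) = sq x - 2 * ip x y + sq y.
Proof. rewrite /sq !ipE (ip_sym ip y x); ring. Qed.
Lemma sqN x : sq (- x) = sq x.
Proof. rewrite /sq !ipE; ring. Qed.
Lemma sqZ a x : sq (a *: x) = a ^+ 2 * sq x.
Proof. rewrite /sq !ipE; ring. Qed.
Lemma sq_sym x y : sq (x - y) = sq (y - x).
Proof. by rewrite -sqN opprB. Qed.

Lemma amgm t x y : 0 < t -> 2 * ip x y <= t * sq x + t^-1 * sq y.
Proof.
move=> t0. have h := sq_ge0 (t *: x - y).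
rewrite sqB sqZ ipZl in h.
have ht : t != 0 by rewrite gt_eqF.
have e : t * sq x + t^-1 * sq y - 2 * ip x y = t^-1 * (t ^+ 2 * sq x - 2 * (t * ip x y) + sq y).
  by field.
have : 0 <= t^-1 * (t ^+ 2 * sq x - 2 * (t * ip x y) + sq y).
  by apply: mulr_ge0 => //; rewrite invr_ge0 ltW.
by rewrite -e subr_ge0.
Qed.

Lemma amgm_abs t x y : 0 < t -> 2 * `|ip x y| <= t * sq x + t^-1 * sq y.
Proof.
move=> t0; case: (lerP 0 (ip x y)) => h.
  by rewrite ger0_norm //; apply: amgm.
rewrite ltr0_norm // -ipNr -(sqN y); exact: amgm.
Qed.

Lemma sq_mid z a b :
  sq (z - 2^-1 *: (a + b)) = 2^-1 * sq (z - a) + 2^-1 * sq (z - b) - 4^-1 * sq (a - b).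
Proof.
rewrite /sq !ipE !(ip_sym ip b a) !(ip_sym ip a z) !(ip_sym ip b z).
have -> : (4:R) = 2 * 2 by rewrite -natrM.
rewrite !invfM; field; done.
Qed.

Lemma sq_conv l a b :
  sq ((1 - l) *: a + l *: b) = (1 - l) * sq a + l * sq b - l * (1 - l) * sq (a - b).
Proof.
rewrite /sq !ipE !(ip_sym ip b a); ring.
Qed.

Lemma ip_small w e : 0 < e -> exists2 d, 0 < d & forall a, sq a < d -> `|ip w a| < e.
Proof.
move=> e0. set t := (sq w + 1) / e.
have sw := sq_ge0 w.
have t0 : 0 < t by rewrite /t divr_gt0 // ltr_wpDl.
exists (e / t); first by rewrite divr_gt0.
move=> a ha. have h := @amgm_abs t a w t0.
have h1 : t^-1 * sq w < e.
  rewrite /t invf_div mulrC mulrA ltr_pdivrMr; last by rewrite ltr_wpDl.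
  by rewrite mulrC ltr_pM2l // ltrDl.
have h2 : t * sq a < e.
  by rewrite mulrC -ltr_pdivlMr.
rewrite ip_sym. lra.
Qed.

End IP.

Lemma small_inv {R : realType} (e : R) : 0 < e -> exists N, forall i, (N <= i)%N -> i.+1%:R^-1 < e.
Proof.
move=> e0; exists (Num.trunc e^-1) => i hi.
have h := truncnS_gt e^-1.
rewrite -(invrK e) ltf_pV2 ?posrE ?invr_gt0 //.
apply: (lt_le_trans h); by rewrite ler_nat ltnS.
Qed.

Lemma cvg_epsN {R : realType} (u : nat -> R) (l : R) :
  (forall e, 0 < e -> exists N, forall n, (N <= n)%N -> `|u n - l| < e) -> u @ \oo --> l.
Proof.
move=> h; apply/cvgrPdist_lt => e e0.
have [N hN] := h e e0. exists N => // n /= hn. rewrite distrC. exact: hN.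
Qed.

Lemma epsN_cvg {R : realType} (u : nat -> R) (l : R) :
  u @ \oo --> l -> (forall e, 0 < e -> exists N, forall n, (N <= n)%N -> `|u n - l| < e).
Proof.
move=> /cvgrPdist_lt h e e0. have [N _ hN] := h e e0.
exists N => n hn. rewrite distrC. exact: hN.
Qed.

Section IP2.
Context {R : realType} {H : lmodType R} (ip : inner_product H).
Local Notation sq := (sq ip).

Lemma hnorm_lt x e : 0 < e -> sq x < e ^+ 2 -> hnorm ip x < e.
Proof.
move=> e0 h. rewrite /hnorm -(ger0_norm (ltW e0)) -sqrtr_sqr ltr_sqrt //.
have hh : (0:R) < e ^+ 2 by exact: exprn_gt0. exact hh.
Qed.

Lemma hnorm_lt' x e : 0 < e -> hnorm ip x < e -> sq x < e ^+ 2.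
Proof.
move=> e0 h. have s0 := sqrtr_ge0 (sq x). rewrite -(sqr_sqrtr (sq_ge0 ip x)).
rewrite /hnorm in h. rewrite !expr2. nra.
Qed.

Lemma strong_cvgP u l :
  (forall e, 0 < e -> exists N, forall n, (N <= n)%N -> sq (u n - l) < e) -> strong_cvg ip u l.
Proof.
move=> h; apply: cvg_epsN => e e0.
have [N hN] := h (e ^+ 2) (exprn_gt0 _ e0).
exists N => n hn; rewrite subr0 ger0_norm ?sqrtr_ge0 //; exact: hnorm_lt (hN n hn).
Qed.

Lemma strong_cvgE u l : strong_cvg ip u l ->
  (forall e, 0 < e -> exists N, forall n, (N <= n)%N -> sq (u n - l) < e).
Proof.
move=> /epsN_cvg h e e0.
have se : 0 < Num.sqrt e by rewrite sqrtr_gt0.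
have [N hN] := h (Num.sqrt e) se.
exists N => n hn. have := hN n hn. rewrite subr0 ger0_norm ?sqrtr_ge0 // => h1.
by have := hnorm_lt' _ _ se h1; rewrite sqr_sqrtr // ltW.
Qed.

Lemma weak_cvgP u l :
  (forall y e, 0 < e -> exists N, forall n, (N <= n)%N -> `|ip (u n - l) y| < e) -> weak_cvg ip u l.
Proof.
move=> h y; apply: cvg_epsN => e e0. have [N hN] := h y e e0.
exists N => n hn. by have := hN n hn; rewrite ipBl.
Qed.

End IP2.

Lemma gen_min {R : realType} (X : Type) (D : X -> X -> R) (mid : X -> X -> X)
  (P : X -> R -> Prop) (k : R) :
  0 < k ->
  (forall s : nat -> X, (forall e, 0 < e -> exists N, forall i j, (N <= i)%N -> (N <= j)%N -> D (s i) (s j) < e) ->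
     exists l, forall e, 0 < e -> exists N, forall i, (N <= i)%N -> D (s i) l < e) ->
  (exists x r, P x r) ->
  (forall x r, P x r -> 0 <= r) ->
  (forall x r r', P x r -> r <= r' -> P x r') ->
  (forall x x' r r', P x r -> P x' r' -> P (mid x x') ((r + r') / 2 - k * D x x')) ->
  (forall s l m, (forall e, 0 < e -> exists N, forall i, (N <= i)%N -> D (s i) l < e) ->
      (forall i, P (s i) (m + i.+1%:R^-1)) -> 0 <= m -> forall e, 0 < e -> P l (m + e)) ->
  exists l m, 0 <= m /\ (forall e, 0 < e -> P l (m + e)) /\ (forall x r, P x r -> m <= r).
Proof.
move=> k0 compl [x0 [r0 P0]] lb mono midP closed.
set E := [set r | exists x, P x r].
have hE : has_inf E.
  split; first by exists r0, x0.
  by exists 0 => r [x Px]; exact: lb Px.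
set m := inf E.
have m0 : 0 <= m.
  apply: lb_le_inf; first by exists r0, x0.
  by move=> r [x Px]; exact: lb Px.
have mle : forall x r, P x r -> m <= r.
  by move=> x r Px; apply: ge_inf (proj2 hE) _ _; exists x.
have ex : forall i : nat, exists x, P x (m + i.+1%:R^-1).
  move=> i. have ip0 : 0 < i.+1%:R^-1 :> R by rewrite invr_gt0 ltr0Sn.
  have [r [x Px] hr] := inf_adherent ip0 hE.
  by exists x; apply: mono Px _; apply: ltW.
have [s hs] := choice ex.
have cauchy : forall e, 0 < e -> exists N, forall i j, (N <= i)%N -> (N <= j)%N -> D (s i) (s j) < e.
  move=> e e0. have [N hN] := small_inv (k * e) (mulr_gt0 k0 e0).
  exists N => i j hi hj.
  have := mle _ _ (midP _ _ _ _ (hs i) (hs j)).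
  have := hN i hi; have := hN j hj.
  have ki : 0 < i.+1%:R^-1 :> R by rewrite invr_gt0 ltr0Sn.
  have kj : 0 < j.+1%:R^-1 :> R by rewrite invr_gt0 ltr0Sn.
  move=> h1 h2 h3.
  rewrite -(ltr_pM2l k0). set kd := k * D _ _ in h3 *. set ke := k * e in h1 h2 *. set a := i.+1%:R^-1 in h2 h3. set b := j.+1%:R^-1 in h1 h3. clearbody m kd ke a b. lra.
have [l hl] := compl s cauchy.
exists l, m; split => //; split => //.
exact: closed hl hs m0.
Qed.

Lemma le_eps {R : realType} (a b : R) : (forall e, 0 < e -> a <= b + e) -> a <= b.
Proof.
move=> h; case: (lerP a b) => // hab.
have := h ((a - b) / 2). rewrite divr_gt0 ?subr_gt0 // => /(_ isT). lra.
Qed.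

Lemma le_t {R : realType} (a b c : R) : 0 <= c ->
  (forall t, 0 < t -> t <= 1 -> a <= b + t * c) -> a <= b.
Proof.
move=> c0 h; case: (lerP a b) => // hab.
set g := a - b. have g0 : 0 < g by rewrite subr_gt0.
set t := g / (g + 2 * c + 1).
have d0 : 0 < g + 2 * c + 1 by lra.
have t0 : 0 < t by rewrite divr_gt0.
have t1 : t <= 1 by rewrite ler_pdivrMr // mul1r; lra.
have tc : t * c < g.
  rewrite /t mulrAC ltr_pdivrMr //. nra.
have := h t t0 t1. clearbody t. rewrite /g in tc. lra.
Qed.

Section Minty.
Context {R : realType} {H : lmodType R} (ip : inner_product H).
Local Notation sq := (sq ip).

Lemma complete_sq : hilbert_complete ip -> forall u : nat -> H,
  (forall e, 0 < e -> exists N, forall i j, (N <= i)%N -> (N <= j)%N -> sq (u i - u j) < e) ->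
  exists l, forall e, 0 < e -> exists N, forall i, (N <= i)%N -> sq (u i - l) < e.
Proof.
move=> hc u hu. have [l hl] : exists l, strong_cvg ip u l.
  apply: hc => e e0. have [N hN] := hu (e ^+ 2) (exprn_gt0 2 e0).
  exists N => m n hm hn. exact: hnorm_lt (hN m n hm hn).
by exists l; apply: strong_cvgE.
Qed.

Lemma max_mono_in {A : H -> set H} {x u} : maximally_monotone ip A ->
  (forall y v, A y v -> 0 <= ip (x - y) (u - v)) -> A x u.
Proof.
move=> [mA maxA] h.
pose T' := fun a b => A a b \/ (a = x /\ b = u).
have mT : Defs.monotone ip T'.
  move=> a b c d [h1|[-> ->]] [h2|[-> ->]].
  - exact: mA.
  - by rewrite -(opprB x a) -(opprB u c) ipNl ipNr opprK; apply: h.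
  - exact: h.
  - by rewrite !subrr ip0l.
by apply: (maxA T' mT) => [a b hab|]; [left | right].
Qed.

Lemma graph_ne {A : H -> set H} : maximally_monotone ip A -> exists y v, A y v.
Proof.
move=> hA. case: (pselect (exists y v, A y v)) => // hn.
exists 0, 0. apply: max_mono_in hA _ => y v hyv.
by exfalso; apply: hn; exists y, v.
Qed.

Lemma monoA {A : H -> set H} : maximally_monotone ip A -> Defs.monotone ip A.
Proof. by case. Qed.


Lemma minty0 (A : H -> set H) : hilbert_complete ip -> maximally_monotone ip A -> exists x, A x (- x).
Proof.
move=> hc hA. have mA := monoA hA.
pose phi (y v : H) (p : H * H) := ip p.1 v + ip y p.2 - ip y v + 2^-1 * (sq p.1 + sq p.2).
pose P (p : H * H) (r : R) := forall y v, A y v -> phi y v p <= r.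
pose D (p p' : H * H) := sq (p.1 - p'.1) + sq (p.2 - p'.2).
pose mid (p p' : H * H) := (2^-1 *: (p.1 + p'.1), 2^-1 *: (p.2 + p'.2)).
have [l [m [m0 [Pl mle]]]] : exists l m, 0 <= m /\ (forall e, 0 < e -> P l (m + e)) /\ (forall x r, P x r -> m <= r).
  apply: (@gen_min R _ D mid P (8^-1)).
  - by rewrite invr_gt0.
  - move=> s hs.
    have [l1 hl1] : exists l1, forall e, 0 < e -> exists N, forall i, (N <= i)%N -> sq ((s i).1 - l1) < e.
      apply: (complete_sq hc (fun i => (s i).1)) => e e0.
      have [N hN] := hs e e0; exists N => i j hi hj.
      have := hN i j hi hj; rewrite /D; have := sq_ge0 ip ((s i).2 - (s j).2); lra.
    have [l2 hl2] : exists l2, forall e, 0 < e -> exists N, forall i, (N <= i)%N -> sq ((s i).2 - l2) < e.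
      apply: (complete_sq hc (fun i => (s i).2)) => e e0.
      have [N hN] := hs e e0; exists N => i j hi hj.
      have := hN i j hi hj; rewrite /D; have := sq_ge0 ip ((s i).1 - (s j).1); lra.
    exists (l1, l2) => e e0.
    have e2 : 0 < e / 2 by rewrite divr_gt0.
    have [N1 h1] := hl1 _ e2; have [N2 h2] := hl2 _ e2.
    exists (maxn N1 N2) => i hi. rewrite /D /=.
    have := h1 i (leq_trans (leq_maxl _ _) hi); have := h2 i (leq_trans (leq_maxr _ _) hi). lra.
  - have [y0 [v0 h0]] := graph_ne hA. exists (y0, v0), (ip y0 v0 + 2^-1 * (sq y0 + sq v0)).
    move=> y v hyv. rewrite /phi /=. have := mA _ _ _ _ h0 hyv. rewrite ipBl !ipBr. lra.
  - move=> [x u] r Pr /=. case: (lerP 0 r) => // r0. exfalso.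
    have hxu : A x u.
      apply: max_mono_in hA _ => y v hyv. have := Pr y v hyv. rewrite /phi/=.
      have := sq_ge0 ip (x + u). rewrite sqD ipBl !ipBr. lra.
    have := Pr x u hxu. rewrite /phi /=. have := sq_ge0 ip (x+u); rewrite sqD. lra.
  - by move=> p r r' Pr rr' y v hyv; exact: le_trans (Pr y v hyv) rr'.
  - move=> [a b] [a' b'] r r' Pr Pr' y v hyv. have := Pr y v hyv; have := Pr' y v hyv.
    rewrite /phi /D /mid /=.
    have e1 := sq_mid ip 0 a a'. rewrite !sub0r !sqN in e1.
    have e2 := sq_mid ip 0 b b'. rewrite !sub0r !sqN in e2.
    rewrite e1 e2 !ipE. lra.
  - move=> s [l1 l2] m hl hs m0 e e0 y v hyv.
    have e5 : 0 < e / 5 by rewrite divr_gt0.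
    have [d1 d1p hd1] := ip_small ip v (e / 5) e5.
    have [d2 d2p hd2] := ip_small ip y (e / 5) e5.
    have [d3 d3p hd3] := ip_small ip l1 (e / 5) e5.
    have [d4 d4p hd4] := ip_small ip l2 (e / 5) e5.
    have [N1 hN1] := hl d1 d1p. have [N2 hN2] := hl d2 d2p.
    have [N3 hN3] := hl d3 d3p. have [N4 hN4] := hl d4 d4p.
    have [N5 hN5] := small_inv (e / 5) e5.
    set i := maxn (maxn (maxn N1 N2) (maxn N3 N4)) N5.
    have i1 : (N1 <= i)%N by rewrite /i !leq_max leqnn.
    have i2 : (N2 <= i)%N by rewrite /i !leq_max leqnn !orbT.
    have i3 : (N3 <= i)%N by rewrite /i !leq_max leqnn !orbT.
    have i4 : (N4 <= i)%N by rewrite /i !leq_max leqnn !orbT.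
    have i5 : (N5 <= i)%N by rewrite /i !leq_max leqnn !orbT.
    have hsi := hs i y v hyv. rewrite /phi /= in hsi *.
    have hi5 := hN5 i i5.
    set s1 := (s i).1 in hsi *. set s2 := (s i).2 in hsi *.
    have Dsa : forall d, D (s i) (l1, l2) < d -> sq (l1 - s1) < d.
      move=> d; rewrite /D /= sq_sym; have := sq_ge0 ip (s2 - l2); lra.
    have Dsb : forall d, D (s i) (l1, l2) < d -> sq (l2 - s2) < d.
      move=> d; rewrite /D /= (sq_sym _ s2); have := sq_ge0 ip (s1 - l1); lra.
    have b1 := hd1 _ (Dsa _ (hN1 i i1)).
    have b2 := hd2 _ (Dsb _ (hN2 i i2)).
    have b3 := hd3 _ (Dsa _ (hN3 i i3)).
    have b4 := hd4 _ (Dsb _ (hN4 i i4)).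
    have E1 : sq s1 = sq l1 - 2 * ip l1 (l1 - s1) + sq (l1 - s1).
      by rewrite -sqB opprB addrC subrK.
    have E2 : sq s2 = sq l2 - 2 * ip l2 (l2 - s2) + sq (l2 - s2).
      by rewrite -sqB opprB addrC subrK.
    have F1 : ip l1 v = ip s1 v + ip v (l1 - s1) by rewrite ipBr (ip_sym ip s1 v) (ip_sym ip l1 v) addrC subrK.
    have F2 : ip y l2 = ip y s2 + ip y (l2 - s2) by rewrite ipBr addrC subrK.
    rewrite E1 E2 in hsi. rewrite F1 F2.
    have q1 := sq_ge0 ip (l1 - s1). have q2 := sq_ge0 ip (l2 - s2).
    move: b1 b2 b3 b4 hi5 hsi.
    set a1 := ip v (l1 - s1). set a2 := ip y (l2 - s2). set a3 := ip l1 (l1 - s1).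
    set a4 := ip l2 (l2 - s2). set ii := i.+1%:R^-1.
    move=> b1 b2 b3 b4 hi5 hsi.
    have := ler_norm a1; have := ler_norm a2; have := ler_norm a3; have := ler_norm a4.
    clearbody a1 a2 a3 a4 ii. lra.
case: l Pl mle => x u Pl mle.
have Plm : P (x, u) m.
  move=> y v hyv; apply: le_eps => e e0; exact: Pl e e0 y v hyv.
have key : forall y v, A y v ->
    m <= ip y v + 2^-1 * (sq y + sq v) - 2^-1 * (sq (x - y) + sq (u - v)).
  move=> y v hyv.
  apply: (@le_t _ _ _ (2^-1 * (sq (x - y) + sq (u - v)))).
    by apply: mulr_ge0; [rewrite invr_ge0 | apply: addr_ge0; apply: sq_ge0].
  move=> t t0 t1.
  pose zt := ((1-t) *: x + t *: y, (1-t) *: u + t *: v).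
  have Pz : P zt ((1-t) * (m - 2^-1 * (sq x + sq u)) + t * ip y v + 2^-1 * (sq zt.1 + sq zt.2)).
    move=> y' v' h'. rewrite /phi /=. have := Plm y' v' h'. have := mA _ _ _ _ hyv h'.
    rewrite /phi /= ipBl !ipBr !ipE => hm hp.
    have t1' : 0 <= 1 - t by lra.
    nra.
  have := mle _ _ Pz. rewrite /zt /= !sq_conv => hz.
  rewrite -(ler_pM2l t0). nra.
have hp : A (- u) (- x).
  apply: max_mono_in hA _ => y v hyv. have := key y v hyv. have := sq_ge0 ip (x + u).
  rewrite !sqB sqD !ipBl !ipBr !ipNl !ipNr (ip_sym ip y x).
  rewrite (ip_sym ip u x). lra.
have := key _ _ hp. rewrite !sqN !ipNl !ipNr !opprK (ip_sym ip u x) (addrC u x) => h.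
have hxu : x + u = 0.
  apply: (sq_eq0 ip); apply/eqP; rewrite eq_le sq_ge0 andbT.
  move: h; rewrite sqD. lra.
exists x. have hu : u = - x by apply/eqP; rewrite -addr_eq0 addrC hxu.
by move: hp; rewrite hu opprK.
Qed.

End Minty.

Section Res.
Context {R : realType} {H : lmodType R} (ip : inner_product H).
Local Notation sq := (sq ip).

Lemma vec_eq (x y : H) : sq (x - y) = 0 -> x = y.
Proof. by move/(sq_eq0 ip)/eqP; rewrite subr_eq0 => /eqP. Qed.

Lemma max_shift {A : H -> set H} s g : 0 < g -> maximally_monotone ip A ->
  maximally_monotone ip (fun x u => A (x + s) (g^-1 *: u)).
Proof.
move=> g0 [mA maxA]; split.
  move=> x y u v h1 h2. have := mA _ _ _ _ h1 h2.
  have -> : ip ((x + s) - (y + s)) (g^-1 *: u - g^-1 *: v) = g^-1 * ip (x - y) (u - v).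
    by rewrite !ipE; ring.
  by rewrite pmulr_rge0 // invr_gt0.
move=> T' mT' ext x u hT.
pose T'' := fun y a => T' (y - s) (g *: a).
have mT'' : Defs.monotone ip T''.
  move=> y1 y2 a1 a2 h1 h2. have := mT' _ _ _ _ h1 h2.
  have -> : ip ((y1 - s) - (y2 - s)) (g *: a1 - g *: a2) = g * ip (y1 - y2) (a1 - a2).
    by rewrite !ipE; ring.
  by rewrite pmulr_rge0.
have := maxA T'' mT'' _ (x + s) (g^-1 *: u).
rewrite /T'' addrK scalerA divff ?gt_eqF // scale1r; apply => //.
move=> y a hA. rewrite /T''. apply: ext.
by rewrite subrK scalerA mulVf ?gt_eqF // scale1r.
Qed.

Lemma minty (A : H -> set H) g w z : hilbert_complete ip -> maximally_monotone ip A -> 0 < g ->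
  exists y u, A (y - w) u /\ z - y = g *: u.
Proof.
move=> hc hA g0.
have [x hx] := minty0 ip _ hc (max_shift (z - w) g g0 hA : maximally_monotone ip (fun x u => A (x + (z - w)) (g^-1 *: u))).
exists (x + z), (g^-1 *: - x); split.
  by rewrite -addrA.
rewrite scalerA divff ?gt_eqF // scale1r. apply: vec_eq. rewrite /sq !ipE; ring.
Qed.

Lemma res_spec (T : H -> set H) z : (exists y, T y (z - y)) -> T (resolvent T z) (z - resolvent T z).
Proof. by move=> h; apply: (xgetPex 0 h). Qed.

Lemma res_uniq (T : H -> set H) z y : Defs.monotone ip T -> T y (z - y) -> resolvent T z = y.
Proof.
move=> mT hy; apply: xget_unique => // y' hy'.
apply: vec_eq; apply/eqP; rewrite eq_le sq_ge0 andbT.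
have := mT _ _ _ _ hy' hy.
have -> : ip (y' - y) (z - y' - (z - y)) = - sq (y' - y) by rewrite /sq !ipE; ring.
by rewrite oppr_ge0.
Qed.

Lemma mono_scale (T : H -> set H) g : 0 < g -> Defs.monotone ip T -> Defs.monotone ip (op_scale g T).
Proof.
move=> g0 mT x y u v [a [ha ->]] [b [hb ->]].
by rewrite -scalerBr ipZr pmulr_rge0 //; apply: mT.
Qed.

Lemma mono_perturb (T : H -> set H) w : Defs.monotone ip T -> Defs.monotone ip (op_perturb w T).
Proof.
move=> mT x y u v h1 h2. have := mT _ _ _ _ h1 h2.
have -> : ip (x - w - (y - w)) (u - v) = ip (x - y) (u - v) by rewrite !ipE; ring.
done.
Qed.

Lemma mono_add (T S : H -> set H) : Defs.monotone ip T -> Defs.monotone ip S -> Defs.monotone ip (op_add T S).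
Proof.
move=> mT mS x y u v [a [b [ha [hb ->]]]] [a' [b' [ha' [hb' ->]]]].
have -> : ip (x - y) (a + b - (a' + b')) = ip (x - y) (a - a') + ip (x - y) (b - b').
  by rewrite !ipE; ring.
apply: addr_ge0; [exact: mT | exact: mS].
Qed.

Lemma firm (T : H -> set H) z z' a a' : Defs.monotone ip T -> T a (z - a) -> T a' (z' - a') ->
  sq (a - a') <= ip (a - a') (z - z').
Proof.
move=> mT h h'. have := mT _ _ _ _ h h'.
have -> : ip (a - a') (z - a - (z' - a')) = ip (a - a') (z - z') - sq (a - a') by rewrite /sq !ipE; ring.
by rewrite subr_ge0.
Qed.

End Res.

Section Ops.
Context {R : realType} {H : lmodType R} (ip : inner_product H).
Local Notation sq := (sq ip).
Variables (Hc : hilbert_complete ip) (g beta : R) (q : H).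
Hypothesis (hg : 0 < g) (hb0 : 0 < beta) (hb1 : beta < 1).

Definition JJ (C : H -> set H) z := resolvent (op_scale g (op_perturb (- q) C)) z.
Definition RR (C : H -> set H) z := (2 * beta) *: JJ C z - z.

Lemma JJ_mono {C} : maximally_monotone ip C -> Defs.monotone ip (op_scale g (op_perturb (- q) C)).
Proof. by move=> hC; apply: mono_scale => //; apply: mono_perturb; apply: monoA hC. Qed.

Lemma JJ_spec {C} : maximally_monotone ip C -> forall z,
  op_scale g (op_perturb (- q) C) (JJ C z) (z - JJ C z).
Proof.
move=> hC z; apply: res_spec.
have [y [u [h1 h2]]] := @minty _ _ ip C g (- q) z Hc hC hg.
by exists y, u; split.
Qed.

Lemma JJ_spec' {C} : maximally_monotone ip C -> forall z,
  exists u, C (JJ C z - - q) u /\ z - JJ C z = g *: u.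
Proof. by move=> hC z; have [u [h1 h2]] := JJ_spec hC z; exists u. Qed.

Lemma JJ_firm {C} : maximally_monotone ip C -> forall z z',
  sq (JJ C z - JJ C z') <= ip (JJ C z - JJ C z') (z - z').
Proof. by move=> hC z z'; apply: firm (JJ_mono hC) (JJ_spec hC z) (JJ_spec hC z'). Qed.

Lemma RR_ineq {C} : maximally_monotone ip C -> forall z z',
  sq (RR C z - RR C z') <= sq (z - z') - 4 * beta * (1 - beta) * sq (JJ C z - JJ C z').
Proof.
move=> hC z z'. have hf := JJ_firm hC z z'.
rewrite /RR. move: hf. set a := JJ C z. set a' := JJ C z'.
have -> : sq ((2 * beta) *: a - z - ((2 * beta) *: a' - z')) =
   4 * beta ^+ 2 * sq (a - a') - 4 * beta * ip (a - a') (z - z') + sq (z - z').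
  rewrite /sq !ipE !(ip_sym ip z a) !(ip_sym ip z' a) !(ip_sym ip z a') !(ip_sym ip z' a')
    !(ip_sym ip a' a) !(ip_sym ip z' z). ring.
move=> hf. have h : 0 <= beta * (ip (a - a') (z - z') - sq (a - a')).
  by apply: mulr_ge0; [exact: ltW | rewrite subr_ge0].
rewrite expr2. nra.
Qed.


Variables (A B : H -> set H).
Hypothesis (hA : maximally_monotone ip A) (hB : maximally_monotone ip B).

Definition TT z := (2 * beta) *: JJ B (RR A z) - RR A z.
Definition cc := g / (2 * (1 - beta)).

Lemma TT_ineq z z' : sq (TT z - TT z') <= sq (z - z') - 4 * beta * (1 - beta) * sq (JJ A z - JJ A z').
Proof.
have h1 := RR_ineq hB (RR A z) (RR A z'). have h2 := RR_ineq hA z z'.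
have k : 0 <= 4 * beta * (1 - beta).
  by apply: mulr_ge0; [apply: mulr_ge0; [|apply: ltW] | rewrite subr_ge0 ltW].
have := mulr_ge0 k (sq_ge0 ip (JJ B (RR A z) - JJ B (RR A z'))).
rewrite /TT -/(RR B (RR A z)) -/(RR B (RR A z')).
lra.
Qed.

Lemma TT_nonexp z z' : sq (TT z - TT z') <= sq (z - z').
Proof.
have := TT_ineq z z'. have := sq_ge0 ip (JJ A z - JJ A z').
have k : 0 <= 4 * beta * (1 - beta).
  by apply: mulr_ge0; [apply: mulr_ge0; [|apply: ltW] | rewrite subr_ge0 ltW].
have := mulr_ge0 k (sq_ge0 ip (JJ A z - JJ A z')). lra.
Qed.

Lemma resA x : resolvent (op_scale g A) (q + x) = JJ A x - - q.
Proof.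
apply: res_uniq; first by apply: mono_scale => //; exact: monoA hA.
have [u [h1 h2]] := JJ_spec' hA x.
exists u; split => //. rewrite -h2. apply: (vec_eq ip). rewrite /sq !ipE; ring.
Qed.

Lemma fix_char x : TT x = x ->
  resolvent (op_scale g A) (q + x) = resolvent (op_scale cc (op_add A B)) q.
Proof.
move=> hT. rewrite resA. set a := JJ A x.
have hba : JJ B (RR A x) = a.
  have -> : JJ B (RR A x) = a + (2 * beta)^-1 *: (TT x - x).
    apply: (vec_eq ip); rewrite /TT /RR -/a /sq !ipE. field; exact: lt0r_neq0.
  by rewrite hT subrr scaler0 addr0.
have [u [hu1 hu2]] := JJ_spec' hA x.
have [v [hv1 hv2]] := JJ_spec' hB (RR A x).
rewrite hba in hv1 hv2. rewrite -/a in hu1 hu2.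
have eu : u = g^-1 *: (x - a) by rewrite hu2 scalerA mulVf ?gt_eqF // scale1r.
have ev : v = g^-1 *: (RR A x - a) by rewrite hv2 scalerA mulVf ?gt_eqF // scale1r.
symmetry; apply: res_uniq.
  apply: mono_scale; first by rewrite /cc divr_gt0 // mulr_gt0 // subr_gt0.
  by apply: mono_add; [exact: monoA hA | exact: monoA hB].
exists (u + v); split; first by exists u, v.
rewrite eu ev /RR -/a. apply: (vec_eq ip). rewrite /cc /sq !ipE. field.
have : g != 0 by rewrite gt_eqF.
have : 1 - beta != 0 by rewrite subr_eq0 gt_eqF.
move=> h1 h2. by rewrite h1 h2.
Qed.

Lemma fix_exists : in_ran_Id_plus (op_scale cc (op_add A B)) q -> exists x, TT x = x.
Proof.
move=> [p0 [w [[w' [[a0 [b0 [ha0 [hb0' ->]]]] ->]] hq]]].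
set a := p0 - q.
have ep : a - - q = p0 by rewrite /a opprK subrK.
have cc0 : cc != 0 by rewrite /cc mulf_neq0 ?invr_eq0 ?mulf_neq0 ?gt_eqF // subr_gt0.
have eb : b0 = cc^-1 *: (- a) - a0.
  have e1 : - a = cc *: (a0 + b0) by rewrite /a opprB {1}hq addrC addKr.
  rewrite e1 scalerA mulVf // scale1r. apply: (vec_eq ip); rewrite /sq !ipE; ring.
pose xt := a + g *: a0.
have hJA : JJ A xt = a.
  apply: res_uniq; first exact: JJ_mono hA.
  exists a0; split; first by rewrite /op_perturb ep.
  apply: (vec_eq ip); rewrite /xt /sq !ipE; ring.
have hJB : JJ B (RR A xt) = a.
  apply: res_uniq; first exact: JJ_mono hB.
  exists b0; split; first by rewrite /op_perturb ep.
  rewrite /RR hJA eb /xt. apply: (vec_eq ip); rewrite /cc /sq !ipE. field.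
  have : g != 0 by rewrite gt_eqF.
  have : 1 - beta != 0 by rewrite subr_eq0 gt_eqF.
  move=> h1 h2. by rewrite h1 h2.
exists xt. rewrite /TT hJB /RR hJA. apply: (vec_eq ip); rewrite /sq !ipE; ring.
Qed.

End Ops.

Lemma series_unbounded {R : realType} (a : nat -> R) : (forall n, 0 <= a n) ->
  (\sum_(0 <= n <oo) ((a n)%:E) = +oo)%E -> forall M, exists N, M < \sum_(i < N) a i.
Proof.
move=> a0 hs M. apply: contrapT => hn.
have hle : forall N, \sum_(i < N) a i <= M.
  by move=> N; case: (lerP (\sum_(i < N) a i) M) => // h; exfalso; apply: hn; exists N.
have : (\sum_(0 <= n <oo) ((a n)%:E) <= M%:E)%E.
  apply: lime_le; first by apply: is_cvg_nneseries => n _ _; rewrite lee_fin.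
  apply: nearW => N. rewrite sumEFin lee_fin big_mkord. exact: hle.
by rewrite hs.
Qed.

Section CS.
Context {R : realType} {H : lmodType R} (ip : inner_product H).
Local Notation sq := (sq ip).

Lemma cs u v : ip u v <= Num.sqrt (sq u) * Num.sqrt (sq v).
Proof.
case: (eqVneq u 0) => [->|u0]; first by rewrite ip0l sq0 sqrtr0 mul0r.
case: (eqVneq v 0) => [->|v0]; first by rewrite ip0r sq0 sqrtr0 mulr0.
have su : 0 < sq u.
  rewrite lt_neqAle sq_ge0 andbT; apply: contra u0 => /eqP h; apply/eqP; apply: (sq_eq0 ip); by rewrite -h.
have sv : 0 < sq v.
  rewrite lt_neqAle sq_ge0 andbT; apply: contra v0 => /eqP h; apply/eqP; apply: (sq_eq0 ip); by rewrite -h.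
have ru : 0 < Num.sqrt (sq u) by rewrite sqrtr_gt0.
have rv : 0 < Num.sqrt (sq v) by rewrite sqrtr_gt0.
have t0 : 0 < Num.sqrt (sq v) / Num.sqrt (sq u) by rewrite divr_gt0.
have := amgm ip _ u v t0.
rewrite -{2}(sqr_sqrtr (ltW su)) -{3}(sqr_sqrtr (ltW sv)) invf_div.
have -> : Num.sqrt (sq v) / Num.sqrt (sq u) * Num.sqrt (sq u) ^+ 2 = Num.sqrt (sq u) * Num.sqrt (sq v).
  by field; rewrite gt_eqF.
have -> : Num.sqrt (sq u) / Num.sqrt (sq v) * Num.sqrt (sq v) ^+ 2 = Num.sqrt (sq u) * Num.sqrt (sq v).
  by field; rewrite gt_eqF.
lra.
Qed.

Lemma sq_tri u v a b : 0 <= a -> 0 <= b -> sq u <= a ^+ 2 -> sq v <= b ^+ 2 -> sq (u + v) <= (a + b) ^+ 2.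
Proof.
move=> a0 b0 hu hv. rewrite sqD. have := cs u v.
have hu' : Num.sqrt (sq u) <= a by rewrite -(ger0_norm a0) -sqrtr_sqr ler_wsqrtr.
have hv' : Num.sqrt (sq v) <= b by rewrite -(ger0_norm b0) -sqrtr_sqr ler_wsqrtr.
have := sqrtr_ge0 (sq u). have := sqrtr_ge0 (sq v).
nra.
Qed.

End CS.

Section KM.
Context {R : realType} {H : lmodType R} (ip : inner_product H).
Local Notation sq := (sq ip).
Variables (T : H -> H) (lam : nat -> R) (x : nat -> H).
Hypothesis (hT : forall z z', sq (T z - T z') <= sq (z - z')).
Hypothesis (hlam : forall n, 0 <= lam n <= 1).
Hypothesis (hx : forall n, x n.+1 = (1 - lam n) *: x n + lam n *: T (x n)).

Lemma fejer {f} : T f = f -> forall n,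
  sq (x n.+1 - f) <= sq (x n - f) - lam n * (1 - lam n) * sq (T (x n) - x n).
Proof.
move=> hf n. have [l0 l1] := andP (hlam n).
have -> : x n.+1 - f = (1 - lam n) *: (x n - f) + lam n *: (T (x n) - T f).
  rewrite hx hf. apply: (vec_eq ip). rewrite /sq !ipE. ring.
rewrite sq_conv.
have -> : x n - f - (T (x n) - T f) = - (T (x n) - x n).
  rewrite hf. apply: (vec_eq ip). rewrite /sq !ipE. ring.
rewrite sqN.
have := ler_wpM2l l0 (hT (x n) f). lra.
Qed.

Lemma lam_prod_ge0 n : 0 <= lam n * (1 - lam n).
Proof. have [l0 l1] := andP (hlam n). by apply: mulr_ge0; rewrite ?subr_ge0. Qed.

Lemma fejer1 {f} : T f = f -> forall n, sq (x n.+1 - f) <= sq (x n - f).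
Proof.
move=> hf n. have := fejer hf n.
have := mulr_ge0 (lam_prod_ge0 n) (sq_ge0 ip (T (x n) - x n)). lra.
Qed.

Lemma fejer_mono {f} : T f = f -> forall k n, (k <= n)%N -> sq (x n - f) <= sq (x k - f).
Proof.
move=> hf k n hkn. rewrite -(subnK hkn). elim: (n - k)%N => [|d IH] //=.
by rewrite addSn; apply: le_trans (fejer1 hf _) IH.
Qed.

Lemma d_mono n : sq (T (x n.+1) - x n.+1) <= sq (T (x n) - x n).
Proof.
have [l0 l1] := andP (hlam n).
set D := sq (T (x n) - x n). set s := Num.sqrt D.
have s0 : 0 <= s by apply: sqrtr_ge0.
have Ds : D = s ^+ 2 by rewrite sqr_sqrtr // sq_ge0.
have -> : T (x n.+1) - x n.+1 = (T (x n.+1) - T (x n)) + (1 - lam n) *: (T (x n) - x n).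
  rewrite {2}hx. apply: (vec_eq ip). rewrite /sq !ipE. ring.
have e1 : sq (x n.+1 - x n) = lam n ^+ 2 * D.
  rewrite hx /D -sqZ. congr (sq _). apply: (vec_eq ip). rewrite /sq !ipE. ring.
have eD : lam n * s + (1 - lam n) * s = s by ring.
apply: (@le_trans _ _ ((lam n * s + (1 - lam n) * s) ^+ 2)); last by rewrite eD -Ds.
apply: sq_tri.
- by apply: mulr_ge0.
- by apply: mulr_ge0; rewrite ?subr_ge0.
- by apply: le_trans (hT _ _) _; rewrite e1 Ds exprMn.
- by rewrite sqZ -/D Ds exprMn.
Qed.

Lemma d_anti k n : (k <= n)%N -> sq (T (x n) - x n) <= sq (T (x k) - x k).
Proof.
move=> hkn. rewrite -(subnK hkn). elim: (n - k)%N => [|d IH] //=.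
by rewrite addSn; apply: le_trans (d_mono _) IH.
Qed.

Lemma sum_bound {f} : T f = f -> forall N,
  sq (x N - f) + \sum_(i < N) lam i * (1 - lam i) * sq (T (x i) - x i) <= sq (x 0 - f).
Proof.
move=> hf; elim=> [|N IH]; first by rewrite big_ord0 addr0.
rewrite big_ord_recr /=. have := fejer hf N. lra.
Qed.

Lemma d_lim {f} : T f = f -> (forall M, exists N, M < \sum_(i < N) lam i * (1 - lam i)) ->
  forall e, 0 < e -> exists N, forall n, (N <= n)%N -> sq (T (x n) - x n) < e.
Proof.
move=> hf hs e e0.
have [N hN] := hs (sq (x 0 - f) / e).
exists N => n hn. apply: (le_lt_trans (d_anti _ _ hn)).
case: (ltrP (sq (T (x N) - x N)) e) => // hge. exfalso.
have h1 : (\sum_(i < N) lam i * (1 - lam i)) * e <=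
          \sum_(i < N) lam i * (1 - lam i) * sq (T (x i) - x i).
  rewrite mulr_suml. apply: ler_sum => i _. apply: ler_wpM2l; first exact: lam_prod_ge0.
  apply: (le_trans hge). apply: d_anti. exact: ltnW.
have h2 := sum_bound hf N. have := sq_ge0 ip (x N - f).
move: hN. rewrite ltr_pdivrMr // => hN. lra.
Qed.

End KM.

Lemma ninf_ev (P : nat -> Prop) : ~ (forall N, exists n, (N <= n)%N /\ P n) ->
  exists N, forall n, (N <= n)%N -> ~ P n.
Proof.
move=> h; apply: contrapT => h1; apply: h => N; apply: contrapT => h2.
apply: h1; exists N => n hn hp; apply: h2; by exists n.
Qed.

Lemma aux_h3 {R : realType} (t e : R) : 0 < t -> (1 + t^-1) * (e / (3 * (t^-1 + 1))) = e / 3.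
Proof.
move=> t0. rewrite (addrC 1). have p : t^-1 + 1 != 0 by apply: lt0r_neq0; rewrite ltr_wpDl // invr_ge0 ltW.
move: p. set u := t^-1 + 1 => p. clearbody u.
by field.
Qed.

Section AC.
Context {R : realType} {H : lmodType R} (ip : inner_product H).
Local Notation sq := (sq ip).

Lemma sq_add_w t u v : 0 < t -> sq (u + v) <= (1 + t) * sq u + (1 + t^-1) * sq v.
Proof. move=> t0; rewrite sqD; have := amgm ip _ u v t0; lra. Qed.

Variables (Hc : hilbert_complete ip) (T : H -> H) (lam : nat -> R) (x : nat -> H).
Hypothesis (hT : forall z z', sq (T z - T z') <= sq (z - z')).
Hypothesis (hlam : forall n, 0 <= lam n <= 1).
Hypothesis (hx : forall n, x n.+1 = (1 - lam n) *: x n + lam n *: T (x n)).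
Variable (f0 : H).
Hypothesis (hf0 : T f0 = f0).
Hypothesis (hd : forall e, 0 < e -> exists N, forall n, (N <= n)%N -> sq (T (x n) - x n) < e).

Definition evub (I : nat -> Prop) (y : H) (r : R) :=
  exists N, forall n, (N <= n)%N -> I n -> sq (x n - y) <= r.
Definition infinite (I : nat -> Prop) := forall N, exists n, (N <= n)%N /\ I n.

Lemma evub_mid {I y y' r r'} : evub I y r -> evub I y' r' ->
  evub I (2^-1 *: (y + y')) ((r + r') / 2 - 4^-1 * sq (y - y')).
Proof.
move=> [N1 h1] [N2 h2]; exists (maxn N1 N2) => n hn hI.
have := h1 n (leq_trans (leq_maxl _ _) hn) hI. have := h2 n (leq_trans (leq_maxr _ _) hn) hI.
rewrite sq_mid. lra.
Qed.

Lemma ac {I} : infinite I -> exists c m, 0 <= m /\ (forall e, 0 < e -> evub I c (m + e)) /\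
  (forall y r, evub I y r -> m <= r).
Proof.
move=> hI.
apply: (@gen_min R H (fun y y' => sq (y - y')) (fun y y' => 2^-1 *: (y + y')) (evub I) (4^-1)).
- by rewrite invr_gt0.
- by move=> s hs; apply: (complete_sq ip Hc).
- exists f0, (sq (x 0 - f0)), 0%N => n _ _. exact: (fejer_mono ip T lam x hT hlam hx hf0 0 n (leq0n n)).
- move=> y r [N hN]. have [n [hn In]] := hI N. apply: le_trans (hN n hn In). exact: sq_ge0.
- move=> y r r' [N hN] hr; exists N => n hn In; exact: le_trans (hN n hn In) hr.
- by move=> y y' r r' h1 h2; apply: evub_mid.
- move=> s l m hl hs m0 e e0.
  set t := e / (3 * (m + 2)).
  have t0 : 0 < t by rewrite /t divr_gt0 // mulr_gt0 // ltr_wpDl.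
  set dl := e / (3 * (t^-1 + 1)).
  have dl0 : 0 < dl by rewrite /dl divr_gt0 // mulr_gt0 // ltr_wpDl // invr_ge0 ltW.
  have [N1 hN1] := hl dl dl0.
  have e3 : 0 < e / 3 by rewrite divr_gt0.
  have [N2 hN2] := small_inv (e / 3) e3.
  set i := maxn N1 N2.
  have [N hN] := hs i.
  exists N => n hn In.
  have ha := hN n hn In. have hb := hN1 i (leq_maxl _ _). have hii := hN2 i (leq_maxr _ _).
  have ii1 : i.+1%:R^-1 <= 1 :> R by rewrite invf_le1 // ler1n.
  have ii0 : 0 <= i.+1%:R^-1 :> R by rewrite invr_ge0.
  have -> : x n - l = (x n - s i) + (s i - l) by rewrite addrA subrK.
  apply: le_trans (sq_add_w _ _ _ t0) _.
  have h1 : t * sq (x n - s i) <= t * (m + 1).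
    by apply: ler_wpM2l; [exact: ltW | apply: le_trans ha _; rewrite lerD2l].
  have h2 : t * (m + 1) <= e / 3.
    have et : t * (3 * (m + 2)) = e.
      rewrite /t mulfVK //; apply: lt0r_neq0; rewrite mulr_gt0 //; lra.
    move: et t0; clearbody t; move=> et t0. lra.
  have h3 : (1 + t^-1) * sq (s i - l) <= e / 3.
    have tp : 0 < 1 + t^-1 by rewrite ltr_wpDr ?invr_ge0 ?ltW.
    apply: le_trans (ler_wpM2l (ltW tp) (ltW hb)) _.
    by rewrite /dl aux_h3.
  move: ha h1 h2 h3 hii ii1 ii0. set ii := i.+1%:R^-1. set a := sq (x n - s i).
  set b := sq (s i - l). clearbody ii a b t. move=> ha h1 h2 h3 hii ii1 ii0.
  nra.
Qed.


Lemma ac_strong {I c m} : (forall e, 0 < e -> evub I c (m + e)) -> (forall y r, evub I y r -> m <= r) ->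
  forall y r, evub I y r -> m + 2^-1 * sq (y - c) <= r.
Proof.
move=> hc hm y r hy. apply: le_eps => e e0.
have := hm _ _ (evub_mid hy (hc e e0)). rewrite sq_sym. 
have := sq_ge0 ip (c - y). lra.
Qed.

Lemma ac_fix {I c m} : infinite I -> (forall e, 0 < e -> evub I c (m + e)) ->
  (forall y r, evub I y r -> m <= r) -> 0 <= m -> T c = c.
Proof.
move=> hI hc hm m0.
have key : forall e', 0 < e' -> evub I (T c) (m + e').
  move=> e' e'0.
  set e := e' / 3. have e0 : 0 < e by rewrite divr_gt0.
  set t := e' / (3 * (m + e + 1)).
  have t0 : 0 < t by rewrite /t divr_gt0 // mulr_gt0 //; lra.
  set dl := e' / (3 * (t^-1 + 1)).
  have dl0 : 0 < dl by rewrite /dl divr_gt0 // mulr_gt0 // ltr_wpDl // invr_ge0 ltW.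
  have [N1 h1] := hc e e0. have [N2 h2] := hd dl dl0.
  exists (maxn N1 N2) => n hn In.
  have ha := h1 n (leq_trans (leq_maxl _ _) hn) In.
  have hb := h2 n (leq_trans (leq_maxr _ _) hn).
  have -> : x n - T c = (T (x n) - T c) + (x n - T (x n)) by apply: (vec_eq ip); rewrite /sq !ipE; ring.
  apply: le_trans (sq_add_w _ _ _ t0) _.
  have hu : sq (T (x n) - T c) <= m + e by apply: le_trans (hT _ _) ha.
  have h3 : (1 + t^-1) * sq (x n - T (x n)) <= e' / 3.
    have tp : 0 < 1 + t^-1 by rewrite ltr_wpDr ?invr_ge0 ?ltW.
    rewrite sq_sym. apply: le_trans (ler_wpM2l (ltW tp) (ltW hb)) _.
    by rewrite /dl aux_h3.
  have h4 : t * sq (T (x n) - T c) <= t * (m + e) by apply: ler_wpM2l => //; exact: ltW.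
  have h5 : t * (m + e) <= e' / 3.
    have et : t * (3 * (m + e + 1)) = e'.
      rewrite /t mulfVK //; apply: lt0r_neq0; rewrite mulr_gt0 //; lra.
    move: et t0; clearbody t; move=> et t0. lra.
  move: hu h3 h4 h5. rewrite /e. clearbody t. move=> hu h3 h4 h5. lra.
have h0 : sq (T c - c) <= 0.
  apply: le_eps => e e0. have e2 : 0 < e / 2 by rewrite divr_gt0.
  have := ac_strong hc hm _ _ (key _ e2). lra.
apply: (vec_eq ip). apply/eqP; rewrite eq_le h0 sq_ge0 //.
Qed.

Lemma transfer {I f r} : T f = f -> infinite I -> evub I f r -> evub (fun _ => True) f r.
Proof.
move=> hf hI [N hN]. have [k [hk Ik]] := hI N.
exists k => n hn _. apply: le_trans (hN k hk Ik).
exact: (fejer_mono ip T lam x hT hlam hx hf k n hn).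
Qed.

Lemma weak_main : exists c, T c = c /\ weak_cvg ip x c.
Proof.
have hall : infinite (fun _ => True) by move=> N; exists N.
have [c [m [m0 [hc hm]]]] := ac hall.
have Tc := ac_fix hall hc hm m0.
exists c; split => //.
have no_bias : forall y e, 0 < e -> infinite (fun n => e <= ip (x n - c) y) -> False.
  move=> y e e0 hI.
  have [c' [m' [m'0 [hc' hm']]]] := ac hI.
  have Tc' := ac_fix hI hc' hm' m'0.
  have mm : m <= m'.
    apply: le_eps => e1 e1p. apply: hm. apply: transfer Tc' hI _. exact: hc'.
  set t := e / (sq y + 1).
  have sy := sq_ge0 ip y.
  have t0 : 0 < t by rewrite /t divr_gt0 // ltr_wpDl.
  have ty : t * sq y <= e.
    have et : t * (sq y + 1) = e by rewrite /t mulfVK //; apply: lt0r_neq0; lra.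
    move: et t0; clearbody t => et t0. nra.
  have te2 : 0 < t * e / 2 by rewrite divr_gt0 // mulr_gt0.
  have [N hN] := hc _ te2.
  have hev : evub (fun n => e <= ip (x n - c) y) (c + t *: y) (m + t * e / 2 - 2 * t * e + t * (t * sq y)).
    exists N => n hn In.
    have -> : x n - (c + t *: y) = (x n - c) - t *: y by apply: (vec_eq ip); rewrite /sq !ipE; ring.
    rewrite sqB sqZ ipZr. have := hN n hn I.
    have := ler_wpM2l (ltW t0) In. lra.
  have := hm' _ _ hev.
  have := ler_wpM2l (ltW t0) ty. lra.
apply: weak_cvgP => y e e0.
apply: contrapT => hn.
case: (pselect (infinite (fun n => e <= ip (x n - c) y))) => [hi|hni].
  exact: no_bias hi.
have [N1 hN1] := ninf_ev _ hni.
apply: (no_bias (- y) e e0) => N.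
have : ~ (forall n, (maxn N N1 <= n)%N -> `|ip (x n - c) y| < e).
  by move=> h; apply: hn; exists (maxn N N1).
move=> /existsNP [n /not_implyP [hn1 hn2]].
exists n; split; first exact: leq_trans (leq_maxl _ _) hn1.
have hlt : ip (x n - c) y < e.
  by case: (ltrP (ip (x n - c) y) e) => // hh; exfalso; apply: (hN1 n (leq_trans (leq_maxr _ _) hn1)).
move: hn2 hlt. rewrite ipNr.
case: (lerP 0 (ip (x n - c) y)) => h0.
  by rewrite ger0_norm //; lra.
by rewrite ltr0_norm //; lra.
Qed.


End AC.

Lemma inv_half {R : realType} (t a : R) : t != 0 -> t^-1 * (t * a / 2) = a / 2.
Proof. by move=> t0; field. Qed.

Theorem theorem3p5 (R : realType) (H : lmodType R) (ip : inner_product H)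
  (Hcomplete : hilbert_complete ip)
  (A B : H -> set H)
  (hA : maximally_monotone ip A) (hB : maximally_monotone ip B)
  (gamma : R) (hgamma : 0 < gamma)
  (lam : nat -> R) (hlam : forall n, 0 <= lam n <= 1)
  (hsum : (\sum_(0 <= n <oo) ((lam n * (1 - lam n))%:E) = +oo)%E)
  (beta : R) (hbeta : 0 < beta < 1)
  (q : H)
  (hq : in_ran_Id_plus (op_scale (gamma / (2 * (1 - beta))) (op_add A B)) q)
  (x0 : H) (x : nat -> H)
  (hx0 : x 0%N = x0)
  (hx : forall n : nat,
     x n.+1 = (1 - lam n) *: x n + lam n *:
       ((2 * beta) *: resolvent (op_scale gamma (op_perturb (- q) B))
            ((2 * beta) *: resolvent (op_scale gamma (op_perturb (- q) A)) (x n) - x n)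
        - ((2 * beta) *: resolvent (op_scale gamma (op_perturb (- q) A)) (x n) - x n))) :
  exists xstar : H,
    xstar =
      (2 * beta) *: resolvent (op_scale gamma (op_perturb (- q) B))
          ((2 * beta) *: resolvent (op_scale gamma (op_perturb (- q) A)) xstar - xstar)
      - ((2 * beta) *: resolvent (op_scale gamma (op_perturb (- q) A)) xstar - xstar)
    /\ strong_cvg ip (fun n => x n.+1 - x n) 0
    /\ weak_cvg ip x xstar
    /\ resolvent (op_scale gamma A) (q + xstar)
       = resolvent (op_scale (gamma / (2 * (1 - beta))) (op_add A B)) q
    /\ strong_cvg ip (fun n => resolvent (op_scale gamma A) (q + x n))
         (resolvent (op_scale (gamma / (2 * (1 - beta))) (op_add A B)) q).
Proof.
have [hb0 hb1] := andP hbeta.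
set T := TT gamma beta q A B.
have hT : forall z z', sq ip (T z - T z') <= sq ip (z - z').
  exact: TT_nonexp ip Hcomplete gamma beta q hgamma hb0 hb1 A B hA hB.
have hTx : forall n, x n.+1 = (1 - lam n) *: x n + lam n *: T (x n) by exact: hx.
have [f0 hf0] := fix_exists ip gamma beta q hgamma hb1 A B hA hB hq.
have pos : forall n, 0 <= lam n * (1 - lam n).
  by move=> n; have [l0 l1] := andP (hlam n); apply: mulr_ge0; rewrite ?subr_ge0.
have hs' := series_unbounded (fun n => lam n * (1 - lam n)) pos hsum.
have hd := d_lim ip T lam x hT hlam hTx hf0 hs'.
have [c [Tc wc]] := weak_main ip Hcomplete T lam x hT hlam hTx f0 hf0 hd.
have fc := fix_char ip Hcomplete gamma beta q hgamma hb0 hb1 A B hA hB c Tc.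
exists c; split; first by rewrite -[LHS]Tc.
split.
  apply: strong_cvgP => e e0. have [N hN] := hd e e0.
  exists N => n hn. rewrite subr0.
  have -> : x n.+1 - x n = lam n *: (T (x n) - x n).
    rewrite hTx. apply: (vec_eq ip). rewrite /sq !ipE. ring.
  rewrite sqZ. apply: le_lt_trans (hN n hn). have [l0 l1] := andP (hlam n).
  have := sq_ge0 ip (T (x n) - x n). 
  have : lam n ^+ 2 <= 1 by rewrite expr_le1.
  set s := sq ip _. clearbody s. nra.
split => //. split => //.
rewrite -fc.
apply: strong_cvgP => e e0.
have k0 : 0 < 4 * beta * (1 - beta) by rewrite !mulr_gt0 // subr_gt0.
move: k0; set k := 4 * beta * (1 - beta) => k0.
set B0 := sq ip (x 0 - c).
have B0p : 0 <= B0 by apply: sq_ge0.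
set t := k * e / (2 * (B0 + 1)).
have t0 : 0 < t by apply: divr_gt0; [exact: mulr_gt0 | apply: mulr_gt0 => //; lra].
have tB : t * B0 < k * e / 2.
  have et : t * (2 * (B0 + 1)) = k * e.
    by rewrite /t mulfVK //; apply: lt0r_neq0; apply: mulr_gt0 => //; lra.
  move: et t0; clearbody t; move=> et t0. lra.
set dl := t * (k * e) / 2.
have dl0 : 0 < dl by apply: divr_gt0 => //; apply: mulr_gt0 => //; exact: mulr_gt0.
have tdl : t^-1 * dl = k * e / 2 by rewrite /dl inv_half // gt_eqF.
have [N hN] := hd dl dl0. exists N => n hn.
rewrite !(resA ip Hcomplete gamma q hgamma A hA).
have -> : JJ gamma q A (x n) - - q - (JJ gamma q A c - - q) = JJ gamma q A (x n) - JJ gamma q A c.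
  apply: (vec_eq ip). rewrite /sq !ipE. ring.
have h1 := TT_ineq ip Hcomplete gamma beta q hgamma hb0 hb1 A B hA hB (x n) c.
change (is_true (sq ip (T (x n) - T c) <= sq ip (x n - c) - k * sq ip (JJ gamma q A (x n) - JJ gamma q A c))) in h1.
rewrite Tc in h1.
have eqd : T (x n) - c = (x n - c) + (T (x n) - x n).
  apply: (vec_eq ip). rewrite /sq !ipE. ring.
rewrite eqd sqD in h1.
have h2 := amgm_abs ip t (x n - c) (T (x n) - x n) t0.
have h3 : t * sq ip (x n - c) <= t * B0.
  apply: ler_wpM2l; first exact: ltW.
  exact: (fejer_mono ip T lam x hT hlam hTx Tc 0 n (leq0n n)).
have h4 : t^-1 * sq ip (T (x n) - x n) <= k * e / 2.
  rewrite -tdl. apply: ler_wpM2l; first by rewrite invr_ge0 ltW.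
  exact: ltW (hN n hn).
have h5 := ler_norm (- ip (x n - c) (T (x n) - x n)). rewrite normrN in h5.
have h6 := sq_ge0 ip (T (x n) - x n).
rewrite -(ltr_pM2l k0).
move: h1 h2 h3 h4 h5 h6 tB.
set s := sq ip (JJ _ _ _ _ - _). set a := sq ip (x n - c). set d := sq ip (T (x n) - x n).
set w := ip (x n - c) _. set ti := t^-1.
clearbody s a d w ti t k B0. move=> h1 h2 h3 h4 h5 h6 tB.
lra.
Qed.
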